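(* Let $g$ be a positive integer. Then there exists $c=c(g)>0$ such that for every integer $n\geq 3$ there exist a set of $n$ points and a set of $n$ open axis-parallel rectangles in $\mathbb{R}^2$ whose incidence graph $G$ has girth at least $g$ and at least $c\,n\log\log n$ edges.
   Context: An open axis-parallel rectangle is a set $(a,c)\times(b,d)\subset\mathbb{R}^2$. The incidence graph of a set $P$ of points and a set $\mathcal{R}$ of rectangles is the bipartite graph with vertex classes $P$ and $\mathcal{R}$, where $p\in P$ and $R\in\mathcal{R}$ are adjacent iff $p\in R$. The girth of a graph is the length of its shortest cycle. *)

(* Defs.v *)
From Stdlib Require Import Reals.
From mathcomp Require Import all_boot.
Set Implicit Arguments. Unset Strict Implicit. Unset Printing Implicit Defensive.

Open Scope R_scope.

Definition point := (R * R)%type.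

(* An open axis-parallel rectangle (a,c) x (b,d) is given by (a, c, b, d). *)
Definition rectangle := (R * R * R * R)%type.

Definition in_rect (p : point) (r : rectangle) : Prop :=
  let '(a, c, b, d) := r in a < fst p < c /\ b < snd p < d.

Definition Rltb (x y : R) : bool := if Rlt_dec x y then true else false.

Definition in_rectb (p : point) (r : rectangle) : bool :=
  let '(a, c, b, d) := r in
  [&& Rltb a (fst p), Rltb (fst p) c, Rltb b (snd p) & Rltb (snd p) d].

Definition incidence_rel (m k : nat) (P : 'I_m -> point) (Q : 'I_k -> rectangle)
  : rel ('I_m + 'I_k)%type :=
  fun u v => match u, v with
             | inl i, inr j => in_rectb (P i) (Q j)
             | inr j, inl i => in_rectb (P i) (Q j)
             | _, _ => false
             end.

Definition incidence_edges (m k : nat) (P : 'I_m -> point) (Q : 'I_k -> rectangle) : nat :=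
  #|[set x : 'I_m * 'I_k | in_rectb (P x.1) (Q x.2)]|.

(* A cycle of a (simple, symmetric) graph e: a list of >= 3 pairwise distinct
   vertices v_0 ... v_{l-1} with v_i ~ v_{i+1} and v_{l-1} ~ v_0.
   "girth at least g": every cycle has length at least g
   (an acyclic graph has infinite girth). *)
Definition girth_at_least (T : finType) (e : rel T) (g : nat) : Prop :=
  forall s : seq T, uniq s -> (3 <= size s)%N -> cycle e s -> (g <= size s)%N.

Definition distinct_points (n : nat) (P : 'I_n -> point) : Prop :=
  forall i1 i2, P i1 = P i2 -> i1 = i2.

Definition distinct_rects (n : nat) (Q : 'I_n -> rectangle) : Prop :=
  forall j1 j2, (forall p, in_rect p (Q j1) <-> in_rect p (Q j2)) -> j1 = j2.

(* Main.v *)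
Require Import Defs.
From Stdlib Require Import Reals.
From mathcomp Require Import all_boot.
From Stdlib Require Import Lra Classical.
From mathcomp Require zify.
From Stdlib Require Import Lia.
Set Implicit Arguments. Unset Strict Implicit. Unset Printing Implicit Defensive.
Open Scope nat_scope.

Open Scope nat_scope.

Lemma count_rot (T : Type) (a : pred T) n (s : seq T) : count a (rot n s) = count a s.
Proof. by rewrite /rot count_cat addnC -count_cat cat_take_drop. Qed.

Section Gen.
Variables (C B : finType) (adj : C -> B -> bool).

Definition Rg : rel (C + B) := fun x y =>
  match x, y with
  | inl j, inl j' => j == j'
  | inl j, inr b => adj j b
  | inr b, inl j => adj j b
  | inr _, inr _ => false
  end.

Lemma Rg_sym : symmetric Rg.
Proof. by case=> [j|b] [j'|b'] //=; rewrite eq_sym. Qed.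

Definition nbcond (w : seq (C + B)) : Prop :=
  forall k b x s, rot k w = inr b :: x :: s -> x != last x s.

Definition Good (g : nat) : Prop :=
  forall w : seq (C + B), 3 <= size w -> cycle Rg w ->
   (forall b, count_mem (inr b) w <= 1) -> (exists b, inr b \in w) -> nbcond w -> g <= size w.

Fixpoint reach (u : C + B) (n : nat) : {set C + B} :=
  if n is n'.+1 then [set y | [exists x in reach u n', (x == y) || Rg x y]] else [set u].

Lemma reach_mono u n : reach u n \subset reach u n.+1.
Proof. apply/subsetP=> x Hx /=; rewrite inE; apply/existsP; exists x; by rewrite Hx eqxx. Qed.

Lemma reach_le u n m : n <= m -> reach u n \subset reach u m.
Proof.
move=> /subnK <-; elim: (m - n) => [|k IH] //=.
by apply: subset_trans IH (reach_mono _ _).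
Qed.

Lemma reach_walk u s : path Rg u s -> last u s \in reach u (size s).
Proof.
elim/last_ind: s => [|s y IH] /=; first by rewrite inE.
rewrite rcons_path last_rcons size_rcons => /andP [Hp Hr] /=.
rewrite inE; apply/existsP; exists (last u s); by rewrite IH // Hr orbT.
Qed.

Lemma card_has_seq (s : seq (C + B)) D :
  (forall x, #|[set y | (x == y) || Rg x y]| <= D) ->
  #|[set y | has (fun x => (x == y) || Rg x y) s]| <= size s * D.
Proof.
move=> HD; elim: s => [|x s IH] /=.
  by rewrite (_ : [set y | false] = set0) ?cards0 //; apply/setP=> y; rewrite !inE.
rewrite (_ : [set y | ((x == y) || Rg x y) || has (fun x0 => (x0 == y) || Rg x0 y) s]
   = [set y | (x == y) || Rg x y] :|: [set y | has (fun x0 => (x0 == y) || Rg x0 y) s]);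
  last by apply/setP=> y; rewrite !inE.
apply: leq_trans (leq_card_setU _ _) _; rewrite mulSn; exact: leq_add.
Qed.

Lemma card_reach u n D :
  (forall x, #|[set y | (x == y) || Rg x y]| <= D) -> #|reach u n| <= D ^ n.
Proof.
move=> HD; elim: n => [|n IH] /=; first by rewrite cards1.
rewrite (_ : [set y | [exists x in reach u n, (x == y) || Rg x y]] =
             [set y | has (fun x => (x == y) || Rg x y) (enum (reach u n))]).
  apply: leq_trans (card_has_seq _ HD) _.
  by rewrite -cardE expnS mulnC leq_mul.

apply/setP=> y; rewrite !inE; apply/existsP/hasP.
  by case=> x /andP [Hx Hr]; exists x; rewrite ?mem_enum.
by case=> x; rewrite mem_enum => Hx Hr; exists x; rewrite Hx.
Qed.

End Gen.

Lemma Good_ext (C B : finType) (a1 a2 : C -> B -> bool) g :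
  (forall j b, a1 j b = a2 j b) -> Good a1 g -> Good a2 g.
Proof.
move=> He H w H1 H2 H3 H4 H5; apply: H => //.
by rewrite (eq_cycle (e' := Rg a2)) // => [[j|b] [j'|b']] /=.
Qed.

Section Greedy.
Variables (C B : finType) (adj : C -> B -> bool) (g : nat) (u : C) (b0 : B).
Definition adj_add j b := adj j b || ((j == u) && (b == b0)).

Lemma greedy_good : Good adj g ->
  (forall s, path (Rg adj) (inl u) s -> last (inl u) s = inr b0 -> g <= (size s).+1) ->
  Good adj_add g.
Proof.
move=> Hg Hw w Hs Hc Hcnt Hb Hnb.
have Heq : {in [pred x | x != inr b0] &, Rg adj_add =2 Rg adj}.
  move=> [j|b] [j'|b'] //=; rewrite !inE /adj_add => Hx Hy //.
    by case: (eqVneq b' b0) Hy => [->|Hbb]; rewrite ?eqxx // andbF orbF.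
  by case: (eqVneq b b0) Hx => [->|Hbb]; rewrite ?eqxx // andbF orbF.
case: (boolP (inr b0 \in w)) => Hin; last first.
  apply: Hg => //; rewrite -(eq_in_cycle Heq) //.
  by apply/allP=> x Hx; rewrite inE; apply: contraNneq Hin => <-.
case: (rot_to Hin) => i s' Hrot.
have Hc' : cycle (Rg adj_add) (inr b0 :: s') by rewrite -Hrot rot_cycle.
have Hcnt' : count_mem (inr b0) (inr b0 :: s') <= 1 by rewrite -Hrot count_rot.
have Hsz : size w = (size s').+1 by rewrite -(size_rot i) Hrot.
move: Hc' Hcnt'; case: s' Hrot Hsz => [|x s] Hrot Hsz; first by rewrite Hsz in Hs.
rewrite /= eqxx add1n ltnS leqn0 => /andP [Hbx]; rewrite rcons_path => /andP [Hp Hl] Hcnt0.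
have Hnin : inr b0 \notin x :: s.
  by rewrite -has_pred1 has_count; move: Hcnt0; rewrite /= => /eqP ->.
have Hall : all [pred z | z != inr b0] (x :: s).
  by apply/allP=> z Hz; rewrite inE; apply: contraNneq Hnin => <-.
have Hp' : path (Rg adj) x s by rewrite -(eq_in_path Heq).
have Hxy := Hnb i b0 x s Hrot.
case: x Hsz Hrot Hnin Hcnt0 Hbx Hl Hxy Hp' Hp Hall => [jx|bx] Hsz Hrot Hnin Hcnt0 Hbx Hl Hxy Hp' Hp Hall //.
have Hyin : last (inl jx) s \in inl jx :: s by apply: mem_last.
have Hsw : size w = (size s).+2 by rewrite Hsz.
case Ey: (last (inl jx) s) Hyin Hl Hxy => [jy|by'] Hyin Hl Hxy //.
move: Hbx Hl; rewrite /= /adj_add.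
case: (eqVneq jx u) => [Ex|Nx]; case: (eqVneq jy u) => [Ey'|Ny] /=.
- by move: Hxy; rewrite Ex Ey' eqxx.
- rewrite orbF => _ Hy.
  have := Hw (rcons s (inr b0)); rewrite rcons_path -Ex Hp' Ey /= Hy last_rcons size_rcons Hsw.
  by move=> H; apply: H.
- rewrite orbF => Hx _.
  have Hrev : path (Rg adj) (inl u) (rev (belast (inl jx) s)).
    rewrite -Ey' -Ey rev_path.
    by rewrite (eq_path (e' := Rg adj)) // => a b'; rewrite Rg_sym.
  have := Hw (rcons (rev (belast (inl jx) s)) (inr b0)).
  rewrite rcons_path Hrev /= last_rcons size_rcons size_rev size_belast Hsw.
  move=> H; apply: H => //.
  move: Ey Hxy; case: s {Hrot Hnin Hcnt0 Hp Hall Hyin Hrev Hp' Hsz Hsw} => [|z s] /=.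
    by move=> ->; rewrite eqxx.
  by move=> _ _; rewrite /= rev_cons last_rcons /= Hx.
- rewrite !orbF => Hx Hy.
  apply: Hg => //.
  by rewrite -(rot_cycle i) Hrot /= rcons_path Hx Hp' /= Ey.
Qed.
End Greedy.

Open Scope nat_scope.

Lemma ex_max_set (X : finType) (P : {set X} -> Prop) :
  P set0 -> exists G, P G /\ forall G', P G' -> #|G'| <= #|G|.
Proof.
move=> H0; apply: NNPP => Hn.
have Hup : forall G, P G -> exists G', P G' /\ #|G| < #|G'|.
  move=> G HG; apply: NNPP => Hne; apply: Hn; exists G; split => // G' HG'.
  rewrite leqNgt; apply/negP => Hlt; apply: Hne; by exists G'.
have : forall n, exists G, P G /\ n <= #|G|.
  elim=> [|n [G [HG Hn']]]; first by exists set0.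
  case: (Hup G HG) => G' [HG' Hlt]; exists G'; split => //; exact: leq_ltn_trans Hn' Hlt.
case/(_ #|X|.+1) => G [_]; by rewrite ltnNge (max_card (mem G)).
Qed.

Lemma sum_bool_card (I : finType) (P : pred I) : \sum_i (P i : nat) = #|[set i | P i]|.
Proof. rewrite -sum1_card [RHS]big_mkcond /=; apply: eq_bigr => i _; rewrite inE; by case: (P i). Qed.

Lemma card_pairs (X Y : finType) (A : {set X * Y}) :
  #|A| = \sum_(x : X) #|[set y | (x, y) \in A]|.
Proof.
rewrite (_ : #|A| = #|[set z | z \in A]|); last by apply: eq_card => z; rewrite inE.
rewrite -sum_bool_card (eq_bigr (fun p => (((p.1, p.2) \in A) : nat))); last by case.
rewrite -(pair_bigA _ (fun x y => (((x, y) \in A) : nat))).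
apply: eq_bigr => x _; by rewrite -sum_bool_card.
Qed.

Lemma card_pairs2 (X Y : finType) (A : {set X * Y}) :
  #|A| = \sum_(y : Y) #|[set x | (x, y) \in A]|.
Proof.
rewrite card_pairs.
rewrite (eq_bigr (fun x => \sum_y (((x, y) \in A) : nat))); last by move=> x _; rewrite -sum_bool_card.
rewrite exchange_big; apply: eq_bigr => y _; by rewrite -sum_bool_card.
Qed.

Lemma card_sum_split (C B : finType) (S : {set C + B}) :
  #|S| = #|[set j | inl j \in S]| + #|[set b | inr b \in S]|.
Proof.
rewrite (_ : #|S| = #|[set z | z \in S]|); last by apply: eq_card => z; rewrite inE.
rewrite -!sum_bool_card (big_sumType _ xpredT) /=.
by congr (_ + _); apply: eq_bigr => i _; rewrite inE.
Qed.

Section Gstar.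
Variables (Pt : finType) (g M T : nat).
Local Notation N := #|Pt|.
Hypothesis HM : M <= 2 * (N * (T - (N + 1) ^ g)).

Definition adjG (G : {set 'I_M * (Pt * 'I_T)}) j b := (j, b) \in G.

Definition okG (G : {set 'I_M * (Pt * 'I_T)}) : Prop :=
  (forall j p t t', (j, (p, t)) \in G -> (j, (p, t')) \in G -> t = t') /\
  (forall b, #|[set j | (j, b) \in G]| <= N) /\ Good (adjG G) g.

Lemma Good_set0 : Good (adjG set0) g.
Proof.
move=> w _ Hc _ [b Hb] _.
have := next_cycle Hc Hb; case: (next w (inr b)) => [j|b'] /=; by rewrite /adjG ?inE.
Qed.

Lemma okG_set0 : okG set0.
Proof.
split; first by move=> j p t t'; rewrite inE.
split; last exact: Good_set0.
move=> b; rewrite (_ : [set j | (j,b) \in set0] = set0) ?cards0 //; by apply/setP => j; rewrite !inE.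
Qed.

Lemma deg_bound (G : {set 'I_M * (Pt * 'I_T)}) : okG G ->
  forall x, #|[set y | (x == y) || Rg (adjG G) x y]| <= N + 1.
Proof.
case=> Hl [Hb _] [j|b]; rewrite card_sum_split.
- rewrite (_ : [set j0 | _] = [set j]); last by apply/setP => j0; rewrite !inE /= orbb eq_sym.
  rewrite cards1 addnC leq_add2r.
  rewrite (_ : [set b0 | _] = [set b0 | (j, b0) \in G]); last by apply/setP => b0; rewrite !inE /=.
  have Hinj : {in [set b0 | (j, b0) \in G] &, injective (fun b0 : Pt * 'I_T => b0.1)}.
    move=> [p1 t1] [p2 t2]; rewrite !inE /= => H1 H2 Hp; subst p2.
    by rewrite (Hl _ _ _ _ H1 H2).
  rewrite -(card_in_imset Hinj); exact: max_card.
- rewrite (_ : [set b0 | _] = [set b]); last by apply/setP => b0; rewrite !inE /= ?orbF; apply/eqP/eqP => [[->]|->].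
  rewrite cards1 leq_add2r.
  rewrite (_ : [set j0 | _] = [set j0 | (j0, b) \in G]); last by apply/setP => j0; rewrite !inE /=.
  exact: Hb.
Qed.

Lemma Gstar_exists : exists G, okG G /\ N * M <= 2 * #|G|.
Proof.
case: (ex_max_set okG_set0) => G [HG Hmax].
exists G; split => //.
pose L p := #|[set x : 'I_M * 'I_T | (x.1, (p, x.2)) \in G]|.
have HGL : #|G| = \sum_p L p.
  pose f (z : Pt * ('I_M * 'I_T)) := (z.2.1, (z.1, z.2.2)).
  have finj : injective f by move=> [p1 [j1 t1]] [p2 [j2 t2]] [-> -> ->].
  have -> : G = f @: [set z | f z \in G].
    apply/setP => x; apply/idP/imsetP.
      case: x => j [p t] Hx; exists (p, (j, t)) => //; by rewrite inE.
    by case=> z; rewrite inE => Hz ->.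
  rewrite card_imset // card_pairs; apply: eq_bigr => p _.
  by apply: eq_card => y; rewrite !inE.
have HL : forall p, M <= 2 * L p.
  move=> p.
  case: (boolP [forall j, [exists t, (j, (p, t)) \in G]]) => Hsat.
    have : M <= L p.
      rewrite /L card_pairs.
      rewrite -{1}(card_ord M) -sum1_card.
      apply: leq_sum => j _.
      move/forallP: Hsat => /(_ j) /existsP [t Ht].
      rewrite card_gt0; apply/set0Pn; exists t; by rewrite !inE /=.
    move=> H; apply: leq_trans H _; rewrite leq_pmull //.
  move: Hsat; rewrite negb_forall => /existsP [u]; rewrite negb_exists => /forallP Hu.
  pose U := [set t | #|[set j | (j, (p, t)) \in G]| < N].
  have HU : forall t, t \in U -> inr (p, t) \in reach (adjG G) (inl u) g.
    move=> t; rewrite inE => Hdeg; apply: NNPP => Hnot.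
    have Hnew : (u, (p, t)) \notin G by apply: Hu.
    pose G' := (u, (p, t)) |: G.
    suff : okG G'.
      move/Hmax; by rewrite cardsU1 Hnew add1n ltnn.
    case: HG => Hl [Hb Hgood].
    split.
      move=> j p0 t1 t2; rewrite !in_setU1 !xpair_eqE.
      case/orP => [/andP [/eqP Ej /andP [/eqP Ep /eqP Et]]|H1];
      case/orP => [/andP [/eqP Ej' /andP [/eqP Ep' /eqP Et']]|H2].
      - by rewrite Et Et'.
      - by subst; move: (Hu t2) H2 => /negP.
      - by subst; move: (Hu t1) H1 => /negP.
      - exact: Hl H1 H2.
    split.
      move=> b; case: (eqVneq b (p, t)) => [Eb|Nb].
        subst b.
        apply: leq_trans (_ : #|[set u] :|: [set j | (j, (p, t)) \in G]| <= _).
          apply: subset_leq_card; apply/subsetP => j; rewrite !inE xpair_eqE.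
          by case/orP => [/andP [-> _]|->] //; rewrite orbT.
        apply: leq_trans (leq_card_setU _ _) _; by rewrite cards1 add1n.
      rewrite (_ : [set j | (j, b) \in G'] = [set j | (j, b) \in G]) ?Hb //.
      by apply/setP => j; rewrite !inE xpair_eqE (negbTE Nb) andbF.
    apply: (@Good_ext _ _ (adj_add (adjG G) u (p, t))).
      by move=> j b; rewrite /adj_add /adjG in_setU1 xpair_eqE orbC.
    apply: greedy_good => // s Hs Hls.
    rewrite leqNgt; apply/negP => Hlt; apply: Hnot.
    have Hsg : size s <= g by apply: ltnW; apply: ltnW.
    rewrite -Hls; apply: (subsetP (reach_le _ _ Hsg)); exact: reach_walk.
  have HUc : #|U| <= (N + 1) ^ g.
    apply: leq_trans (_ : #|reach (adjG G) (inl u) g| <= _); last first.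
      apply: card_reach; exact: deg_bound.
    have finj : injective (fun t : 'I_T => (inr (p, t) : 'I_M + (Pt * 'I_T))) by move=> t1 t2 [].
    rewrite -(card_imset (mem U) finj).
    apply: subset_leq_card; apply/subsetP => x /imsetP [t Ht ->]; exact: HU.
  have Hsum : N * (T - #|U|) <= L p.
    rewrite /L card_pairs2.
    apply: leq_trans (_ : \sum_(t in ~: U) N <= _).
      rewrite sum_nat_const mulnC leq_mul2r; apply/orP; right.
      have := cardsC U; rewrite card_ord => HT; rewrite -{1}HT addKn //=.
    rewrite [X in _ <= X](bigID (mem (~: U))) /=.
    apply: leq_trans (leq_addr _ _).
    apply: leq_sum => t; rewrite !inE -leqNgt => Ht.
    apply: leq_trans Ht _; apply: subset_leq_card; apply/subsetP => j; by rewrite !inE.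
  apply: leq_trans HM _; rewrite leq_mul2l; apply/orP; right.
  apply: leq_trans (_ : N * (T - #|U|) <= _) => //.
  by rewrite leq_mul2l leq_sub2l ?orbT.
rewrite HGL big_distrr /=.
apply: leq_trans (_ : \sum_(p : Pt) M <= _).
  rewrite sum_nat_const; apply: eq_leq; congr (_ * _); apply: eq_card => x; by rewrite !inE.
by apply: leq_sum => p _; apply: HL.
Qed.
End Gstar.

Open Scope nat_scope.

Lemma path_map_in (T U : Type) (e : rel T) (e' : rel U) (f : T -> U) (A : pred T) x s :
  (forall y z, A y -> A z -> e y z -> e' (f y) (f z)) -> all A (x :: s) ->
  path e x s -> path e' (f x) (map f s).
Proof.
move=> H; elim: s x => [|y s IH] x //= /andP [Ax /andP [Ay As]] /andP [Hxy Hp].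
rewrite (H _ _ Ax Ay Hxy) /=; apply: IH => //; by rewrite /= Ay.
Qed.

Lemma cycle_map_in (T U : Type) (e : rel T) (e' : rel U) (f : T -> U) (A : pred T) s :
  (forall y z, A y -> A z -> e y z -> e' (f y) (f z)) -> all A s ->
  cycle e s -> cycle e' (map f s).
Proof.
move=> H; case: s => [|x s] //= Hall Hc.
rewrite -map_rcons; apply: (path_map_in H) Hc.
move: Hall => /= /andP [Ax As]; by rewrite /= Ax all_rcons Ax As.
Qed.

Lemma eq_mixed k a b c d : b < k -> d < k -> (a * k + b == c * k + d) = (a == c) && (b == d).
Proof.
move=> Hb Hd; apply/eqP/andP => [H|[/eqP -> /eqP ->]] //.
have Hk : 0 < k by apply: leq_ltn_trans Hb.
have := congr1 (fun m => m %/ k) H; rewrite /= !divnMDl // !divn_small // !addn0 => Eac.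
subst c; move/eqP: H; rewrite eqn_add2l => /eqP ->; by split.
Qed.

Lemma in_block d m n : 0 < d -> (m * d <= n <= m * d + d - 1) = (n %/ d == m).
Proof.
move=> Hd; rewrite -leq_divRL //.
have -> : (n <= m * d + d - 1) = (n %/ d < m.+1) by rewrite ltn_divLR // mulSn; lia.
by rewrite ltnS -eqn_leq eq_sym.
Qed.

Record cfg := Cfg {
  Pt : finType; Rt : finType;
  px : Pt -> nat; py : Pt -> nat;
  rx1 : Rt -> nat; rx2 : Rt -> nat; ry1 : Rt -> nat; ry2 : Rt -> nat }.

Definition inc (C : cfg) (p : Pt C) (r : Rt C) : bool :=
  (rx1 r <= px p <= rx2 r) && (ry1 r <= py p <= ry2 r).

Definition crel (C : cfg) : rel (Pt C + Rt C) := fun x y =>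
  match x, y with inl p, inr r => inc p r | inr r, inl p => inc p r | _, _ => false end.

Definition edges (C : cfg) := #|[set x : Pt C * Rt C | inc x.1 x.2]|.

Definition wf (C : cfg) (W g : nat) : Prop :=
  injective (@py C) /\ (forall p : Pt C, px p < W) /\ (forall r : Rt C, rx2 r < W) /\
  (forall r : Rt C, rx1 r <= rx2 r /\ ry1 r <= ry2 r) /\
  injective (fun r : Rt C => (rx1 r, rx2 r, ry1 r, ry2 r)) /\
  girth_at_least (@crel C) g.

Section Step.
Variables (C : cfg) (W M T g : nat) (G : {set 'I_M * (Pt C * 'I_T)}).
Hypothesis HM : 0 < M.
Hypothesis Hl : forall j p t t', (j, (p, t)) \in G -> (j, (p, t')) \in G -> t = t'.
Hypothesis HGood : Good (adjG G) g.
Hypothesis Hwf : wf C W g.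

Definition tsel (j : 'I_M) (p : Pt C) : nat :=
  if [pick t | (j, (p, t)) \in G] is Some t then val t else T.

Lemma tsel_le j p : tsel j p <= T.
Proof. rewrite /tsel; case: pickP => [t _|_] //; exact: ltnW (ltn_ord t). Qed.

Lemma tsel_eq j p (t : 'I_T) : (tsel j p == t) = ((j, (p, t)) \in G).
Proof.
rewrite /tsel; case: pickP => [t' Ht'|Hn].
  apply/eqP/idP => [/val_inj <- //|Ht]; by rewrite (Hl Ht' Ht).
rewrite (Hn t); apply/negbTE; by rewrite neq_ltn ltn_ord orbT.
Qed.

Definition spx (x : 'I_M * Pt C) := px x.2 + x.1 * W.
Definition spy (x : 'I_M * Pt C) := (py x.2 * T.+1 + tsel x.1 x.2) * M + x.1.
Definition srx1 (r : ('I_M * Rt C) + (Pt C * 'I_T)) :=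
  match r with inl (j, r0) => rx1 r0 + j * W | inr _ => 0 end.
Definition srx2 (r : ('I_M * Rt C) + (Pt C * 'I_T)) :=
  match r with inl (j, r0) => rx2 r0 + j * W | inr _ => M * W end.
Definition sry1 (r : ('I_M * Rt C) + (Pt C * 'I_T)) :=
  match r with inl (j, r0) => ry1 r0 * (T.+1 * M) | inr (p, t) => (py p * T.+1 + t) * M end.
Definition sry2 (r : ('I_M * Rt C) + (Pt C * 'I_T)) :=
  match r with inl (j, r0) => ry2 r0 * (T.+1 * M) + (T.+1 * M) - 1
  | inr (p, t) => (py p * T.+1 + t) * M + M - 1 end.

Definition step : cfg := @Cfg ('I_M * Pt C)%type (('I_M * Rt C) + (Pt C * 'I_T))%type
  spx spy srx1 srx2 sry1 sry2.

Lemma spy_divM j p : spy (j, p) %/ M = py p * T.+1 + tsel j p.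
Proof. by rewrite /spy divnMDl // divn_small // addn0. Qed.

Lemma spy_divTM j p : spy (j, p) %/ (T.+1 * M) = py p.
Proof.
rewrite /spy mulnDl -mulnA -addnA divnMDl ?muln_gt0 // divn_small ?addn0 //.
have H1 := tsel_le j p; have H2 := ltn_ord j.
have H3 : tsel j p * M <= T * M by rewrite leq_mul2r H1 orbT.
rewrite /= mulSn; lia.
Qed.

Lemma ypart a b j p :
  (a * (T.+1 * M) <= spy (j, p) <= b * (T.+1 * M) + T.+1 * M - 1) = (a <= py p <= b).
Proof.
have HK : 0 < T.+1 * M by rewrite muln_gt0.
rewrite -leq_divRL // spy_divTM; congr (_ && _).
have -> : (spy (j, p) <= b * (T.+1 * M) + T.+1 * M - 1) = (spy (j, p) < b.+1 * (T.+1 * M)).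
  rewrite mulSn; lia.
by rewrite -ltn_divLR // spy_divTM ltnS.
Qed.

Lemma xpart (j j' : 'I_M) x a b : x < W -> a <= b -> b < W ->
  (a + j' * W <= x + j * W <= b + j' * W) = (j == j') && (a <= x <= b).
Proof.
move=> Hx Hab Hb.
case: (eqVneq j j') => [<-|Hne]; first by rewrite !leq_add2r.
apply/negbTE; move: Hne; rewrite neq_ltn => /orP [Hlt|Hgt].
  have Hlt' : (j : nat) < j' := Hlt.
  have : x + j * W < a + j' * W by nia.
  by rewrite ltnNge => /negbTE ->.
have Hgt' : (j' : nat) < j := Hgt.
have : b + j' * W < x + j * W by nia.
by rewrite ltnNge => /negbTE ->; rewrite andbF.
Qed.

Lemma inc_step_l (j : 'I_M) p (j' : 'I_M) r :
  @inc step (j, p) (inl (j', r)) = (j == j') && inc p r.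
Proof.
case: Hwf => _ [Hpx [Hrx [Hnd _]]].
rewrite /inc /= /spx /= -/(spy (j, p)) ypart xpart //; last by case: (Hnd r).
by rewrite -!andbA.
Qed.

Lemma inc_step_r (j : 'I_M) p p' (t : 'I_T) :
  @inc step (j, p) (inr (p', t)) = (p == p') && ((j, (p, t)) \in G).
Proof.
case: Hwf => Hpy [Hpx _].
rewrite /inc /= /spx /= -/(spy (j, p)).
have -> : (px p + j * W <= M * W) = true.
  have := ltn_ord j; have := Hpx p; nia.
rewrite /= in_block // spy_divM eq_mixed ?ltnS ?tsel_le //; last exact: ltnW (ltn_ord t).
by rewrite (inj_eq Hpy) tsel_eq.
Qed.

Lemma card_step_Pt : #|Pt step| = M * #|Pt C|.
Proof. by rewrite /= card_prod card_ord. Qed.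

Lemma card_step_Rt : #|Rt step| = M * #|Rt C| + #|Pt C| * T.
Proof. by rewrite /= card_sum !card_prod !card_ord. Qed.

Lemma edges_step : M * edges C + #|G| <= edges step.
Proof.
pose f1 (z : 'I_M * (Pt C * Rt C)) : Pt step * Rt step := ((z.1, z.2.1), inl (z.1, z.2.2)).
pose f2 (z : 'I_M * (Pt C * 'I_T)) : Pt step * Rt step := ((z.1, z.2.1), inr z.2).
have f1i : injective f1 by move=> [j [p r]] [j' [p' r']] [-> -> _ ->].
have f2i : injective f2 by move=> [j [p t]] [j' [p' t']] [-> -> _ ->].
pose A1 := setX [set: 'I_M] [set x : Pt C * Rt C | inc x.1 x.2].
have -> : M * edges C = #|f1 @: A1| by rewrite card_imset // cardsX cardsT card_ord.
have -> : #|G| = #|f2 @: G| by rewrite card_imset.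
have Hdis : [disjoint f1 @: A1 & f2 @: G].
  rewrite -setI_eq0; apply/eqP/setP => x; rewrite !inE; apply/negP => /andP [].
  move=> /imsetP [z1 _ ->] /imsetP [z2 _].
  by case: z1 z2 => j1 [p1 r1] [j2 [p2 t2]].
have := (leq_card_setU (f1 @: A1) (f2 @: G)).2; rewrite Hdis => /eqP <-.
apply: subset_leq_card; apply/subsetP => x; case/setUP => /imsetP [z Hz ->]; rewrite inE.
  move: Hz; case: z => j [p r]; rewrite !inE /= => Hz.
  by rewrite inc_step_l eqxx.
by case: z Hz => j [p t] Hz; rewrite /= inc_step_r eqxx.
Qed.

Definition spi (x : Pt step + Rt step) : 'I_M + (Pt C * 'I_T) :=
  match x with inl (j, _) => inl j | inr (inl (j, _)) => inl j | inr (inr b) => inr b end.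
Definition isband (x : Pt step + Rt step) := if x is inr (inr _) then true else false.
Definition scp (x : Pt step + Rt step) : 'I_M :=
  match x with inl (j, _) => j | inr (inl (j, _)) => j | inr (inr _) => Ordinal HM end.
Definition ssg (x : Pt step + Rt step) : Pt C + Rt C :=
  match x with inl (_, p) => inl p | inr (inl (_, r)) => inr r | inr (inr (p, _)) => inl p end.

Lemma crel_pi x y : @crel step x y -> Rg (adjG G) (spi x) (spi y).
Proof.
case: x => [[j p]|[[j r]|[p t]]]; case: y => [[j' p']|[[j' r']|[p' t']]] //=.
- by rewrite inc_step_l => /andP [].
- by rewrite inc_step_r => /andP [/eqP <-].
- by rewrite inc_step_l eq_sym => /andP [].
- by rewrite inc_step_r => /andP [/eqP <-].
Qed.

Lemma crel_nb x y : ~~ isband x -> ~~ isband y -> @crel step x y ->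
  scp x = scp y /\ @crel C (ssg x) (ssg y).
Proof.
case: x => [[j p]|[[j r]|[p t]]]; case: y => [[j' p']|[[j' r']|[p' t']]] //= _ _.
- by rewrite inc_step_l => /andP [/eqP -> ->].
- by rewrite inc_step_l => /andP [/eqP -> ->].
Qed.

Lemma path_cp x s : path (@crel step) x s -> all (fun y => ~~ isband y) (x :: s) ->
  all (fun y => scp y == scp x) s.
Proof.
elim: s x => [|y s IH] x //= /andP [Hxy Hp] /and3P [Hx Hy Hs].
have [E _] := crel_nb Hx Hy Hxy.
rewrite E eqxx /=.
apply: sub_all (IH _ Hp _) => [z /eqP ->|] //; by rewrite /= Hy.
Qed.

Lemma girth_step : girth_at_least (@crel step) g.
Proof.
case: Hwf => _ [_ [_ [_ [_ Hgirth]]]].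
move=> Z Hu Hs Hc.
case: (boolP (has isband Z)) => Hb.
- rewrite -(size_map spi); apply: HGood.
  + by rewrite size_map.
  + apply: (@cycle_map_in _ _ _ _ _ xpredT); [move=> y z _ _; exact: crel_pi| by rewrite all_predT | by []].
  + move=> b; rewrite count_map.
    rewrite (eq_count (a2 := pred1 (inr (inr b)))); last by case=> [[j p]|[[j r]|b']].
    by rewrite count_uniq_mem // leq_b1.
  + case/hasP: Hb => x Hx; case: x Hx => [[j p]|[[j r]|b]] //= Hx _; exists b.
    by apply/mapP; exists (inr (inr b)).
  + move=> k b x s; rewrite -map_rot.
    have := rot_uniq k Z; have := rot_cycle k (@crel step) Z; have := size_rot k Z.
    case: (rot k Z) => [|z0 [|z1 s']] //= Hsz; try by rewrite -Hsz in Hs.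
    rewrite Hu Hc => Hc' Hu' [E0 E1 Es]; subst x s.
    rewrite last_map.
    case: z0 E0 Hc' Hu' => [[j0 p0]|[[j0 r0]|[pb tb]]] //= [Eb].
    subst b.
    case: s' Hsz => [|y s''] Hsz; first by rewrite -Hsz in Hs.
    rewrite rcons_path => /andP [H1 /andP [_ H2]].
    move=> /andP [_ /andP [Hz1 _]].
    case: z1 H1 H2 Hz1 => [[j1 p1]|[[j1 r1]|b1]] //= H1 H2 Hz1.
    move: H1; rewrite inc_step_r => /andP [/eqP E1 _]; subst p1.
    have Hly : last y s'' \in y :: s'' by apply: mem_last.
    case E: (last y s'') H2 Hly => [[j2 p2]|[[j2 r2]|b2]] //= H2 Hly.
    move: H2; rewrite inc_step_r => /andP [/eqP E2 _]; subst p2.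
    apply/negP => /eqP [Ej]; subst j2.
    by move: Hz1; rewrite Hly.
- have Hnb : all (fun y => ~~ isband y) Z by rewrite all_predC.
  case: Z Hu Hs Hc Hb Hnb => [|z0 Z'] //= Hu Hs Hc Hb Hnb.
  have Hall : all (fun y => ~~ isband y && (scp y == scp z0)) (z0 :: Z').
    move: Hnb => /= /andP [Hz0 Hnb'].
    have H1 : all (fun y => ~~ isband y) (z0 :: rcons Z' z0) by rewrite /= all_rcons Hz0 Hnb'.
    have := path_cp Hc H1; rewrite all_rcons => /andP [_ Hcp].
    rewrite /= Hz0 eqxx /=; apply/allP => y Hy.
    by rewrite (allP Hnb' _ Hy) (allP Hcp _ Hy).
  suff H : g <= size (map ssg (z0 :: Z')) by rewrite size_map in H.
  apply: Hgirth.
  + rewrite (map_inj_in_uniq (f := ssg)) //.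
    move=> y z /(allP Hall) /andP [Hy /eqP Cy] /(allP Hall) /andP [Hz /eqP Cz].
    move: Cy Cz Hy Hz.
    case: y => [[j p]|[[j r]|[p t]]]; case: z => [[j' p']|[[j' r']|[p' t']]] //= -> -> _ _ [->] //.
  + by rewrite size_map.
  + apply: (cycle_map_in (A := fun y => ~~ isband y && (scp y == scp z0))) => //.
    move=> y z /andP [Hy _] /andP [Hz _] Hyz; by case: (crel_nb Hy Hz Hyz).
    exact: Hc.
Qed.

Lemma wf_step : wf step (M * W).+1 g.
Proof.
case: Hwf => Hpy [Hpx [Hrx [Hnd [Htup Hgirth]]]].
split.
  move=> [j p] [j' p'] /eqP; rewrite /= /spy /= eq_mixed ?ltn_ord // => /andP [/eqP E /eqP Ej].
  move/eqP: E; rewrite eq_mixed ?ltnS ?tsel_le // => /andP [/eqP /Hpy -> _].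
  by rewrite (val_inj Ej).
split.
  move=> [j p] /=; rewrite /spx /=; have := ltn_ord j; have := Hpx p; nia.
split.
  move=> [[j r]|[p t]] /=; last by [].
  have := ltn_ord j; have := Hrx r; nia.
split.
  move=> [[j r]|[p t]] /=; split.
  - by case: (Hnd r) => H _; rewrite leq_add2r.
  - case: (Hnd r) => _ H.
    have : 0 < T.+1 * M by rewrite muln_gt0.
    have : ry1 r * (T.+1 * M) <= ry2 r * (T.+1 * M) by rewrite leq_mul2r H orbT.
    lia.
  - by [].
  - lia.
split.
  move=> [[j r]|[p t]] [[j' r']|[p' t']] /= E.
  - case: E => Ex1 Ex2 Ey1 Ey2.
    have Hj : (j : nat) = j'.
      have := Hrx r; have := Hrx r'; have := Hnd r; have := Hnd r'.
      case: (ltngtP j j') => // H; nia.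
    have Ej : j = j' by apply: val_inj.
    subst j'.
    have HK : 0 < T.+1 * M by rewrite muln_gt0.
    move/addIn: Ex1 => Ex1; move/addIn: Ex2 => Ex2.
    move/eqP: Ey1; rewrite eqn_pmul2r // => /eqP Ey1.
    have Ey2' : ry2 r = ry2 r'.
      apply/eqP; rewrite -(eqn_pmul2r HK); apply/eqP; lia.
    by rewrite (Htup r r') //= Ex1 Ex2 Ey1 Ey2'.
  - case: E => _ Ex2; have := ltn_ord j; have := Hrx r; nia.
  - case: E => _ Ex2; have := ltn_ord j'; have := Hrx r'; nia.
  - have Ht := ltnW (ltn_ord t); have Ht' := ltnW (ltn_ord t').
    case: E => /eqP; rewrite eqn_pmul2r // eq_mixed ?ltnS //.
    by case/andP => /eqP /Hpy -> /eqP /val_inj -> _.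
exact: girth_step.
Qed.
End Step.

Open Scope nat_scope.

Definition C0 : cfg := @Cfg 'I_2 'I_1 (fun p => p) (fun p => p)
  (fun _ => 0) (fun _ => 0) (fun _ => 0) (fun _ => 0).

Lemma wf_C0 g : wf C0 2 g.
Proof.
split; first exact: val_inj.
split; first by move=> p /=.
split; first by [].
split; first by [].
split; first by move=> r r' _; rewrite (ord1 r) (ord1 r').
move=> Z Hu Hs Hc.
have Hin : inl (@Ordinal 2 1 isT) \in Z.
  apply/negPn/negP => Hn.
  have : #|Z| <= #|predC1 (inl (@Ordinal 2 1 isT) : Pt C0 + Rt C0)|.
    apply: subset_leq_card; apply/subsetP => x Hx; rewrite inE.
    by apply: contraNneq Hn => <-.
  rewrite cardC1 card_sum !card_ord (card_uniqP Hu) /=.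
  by rewrite leqNgt Hs.
have := next_cycle Hc Hin.
by case: (next Z _) => [p|r] //=; rewrite /inc /=.
Qed.

Lemma edges_C0 : 1 <= edges C0.
Proof.
rewrite /edges card_gt0; apply/set0Pn; exists (@Ordinal 2 0 isT, @Ordinal 1 0 isT).
by rewrite inE /inc.
Qed.

Fixpoint Nseq (g d : nat) : nat :=
  if d is d'.+1 then Nseq g d' * (Nseq g d' * (2 * (Nseq g d' + 1) ^ g)) else 2.

Lemma level g d : exists C W, wf C W g /\ #|Pt C| = Nseq g d /\
  2 ^ d.+1 <= #|Pt C| /\
  2 ^ d * #|Rt C| + #|Pt C| <= 2 ^ d.+1 * #|Pt C| /\
  d.+1 * #|Pt C| <= 2 * edges C.
Proof.
elim: d => [|d [C [W [Hwf [HN [H2 [HR HE]]]]]]].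
  exists C0, 2; split; first exact: wf_C0.
  rewrite /= !card_ord; split => //; split => //; split => //.
  have := edges_C0; lia.
set N := #|Pt C| in HN H2 HR HE *.
have HN0 : 0 < N by apply: leq_trans H2; rewrite expn_gt0.
set T := 2 * (N + 1) ^ g.
set M := N * T.
have HM : M <= 2 * (N * (T - (N + 1) ^ g)).
  rewrite /M /T; have -> : 2 * (N + 1) ^ g - (N + 1) ^ g = (N + 1) ^ g by lia.
  by rewrite mulnCA.
have HT0 : 0 < T by rewrite /T muln_gt0 expn_gt0 addn1.
have HM0 : 0 < M by rewrite /M muln_gt0 HN0.
case: (Gstar_exists HM) => G [[Hl [Hb Hgood]] HG].
exists (step W G), (M * W).+1.
split; first exact: wf_step.
rewrite card_step_Pt card_step_Rt -/N.
have HE' := edges_step HM0 Hl Hwf.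
have HT2 : 2 <= T.
  rewrite /T; have : 1 <= (N + 1) ^ g by rewrite expn_gt0 addn1.
  lia.
have HM2 : 2 <= M by rewrite /M; nia.
split; first by rewrite /= -HN /M /T mulnC.
split; first by rewrite expnS; apply: leq_mul.
have HMN : N * T = M by [].
rewrite HMN.
split.
  rewrite !expnS in HR H2 *.
  set a := 2 ^ d in HR H2 *.
  set R := #|Rt C| in HR *.
  have F1 : M * (a * R + N) <= M * (2 * a * N) by rewrite leq_mul2l HR orbT.
  have F2 : M * (2 * a) <= M * N by rewrite leq_mul2l H2 orbT.
  lia.
have F3 : M * (d.+1 * N) <= M * (2 * edges C) by rewrite leq_mul2l HE orbT.
rewrite mulnC in HG.
lia.
Qed.

Open Scope nat_scope.

Lemma girth_transfer (T U : finType) (e : rel T) (e' : rel U) (h : T -> option U) g :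
  (forall x y, e x y -> exists x' y', h x = Some x' /\ h y = Some y' /\ e' x' y') ->
  (forall x y u, h x = Some u -> h y = Some u -> x = y) ->
  girth_at_least e' g -> girth_at_least e g.
Proof.
move=> He Hinj Hg Z Hu Hs Hc.
have HS : forall x, x \in Z -> exists u, h x = Some u.
  move=> x Hx; case: (He _ _ (next_cycle Hc Hx)) => x' [y' [Hx' _]]; by exists x'.
case: Z Hu Hs Hc HS => [|z0 Z'] // Hu Hs Hc HS.
case: (HS z0 (mem_head _ _)) => u0 Hu0.
pose h' x := odflt u0 (h x).
have Hh' : forall x, x \in z0 :: Z' -> h x = Some (h' x).
  by move=> x /HS [u Hx]; rewrite /h' Hx.
suff H : g <= size (map h' (z0 :: Z')) by rewrite size_map in H.
apply: Hg.
- rewrite (map_inj_in_uniq (f := h')) // => x y Hx Hy E.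
  by apply: (Hinj x y (h' x)); [exact: Hh' | rewrite E; exact: Hh'].
- by rewrite size_map.
- apply: (cycle_map_in (A := mem (z0 :: Z'))); [|by apply/allP|exact: Hc].
  move=> x y Hx Hy Hxy; case: (He _ _ Hxy) => x' [y' [Ex [Ey Hr]]].
  by move: (Hh' _ Hx) (Hh' _ Hy); rewrite Ex Ey => [[<-] [<-]].
Qed.

Open Scope R_scope.

Lemma Rltb_true x y : x < y -> Rltb x y = true.
Proof. by rewrite /Rltb; case: Rlt_dec. Qed.
Lemma Rltb_false x y : ~ x < y -> Rltb x y = false.
Proof. by rewrite /Rltb; case: Rlt_dec. Qed.

Lemma Rltb_lo (a x : nat) : Rltb (2 * INR a - 1) (2 * INR x) = (a <= x)%N.
Proof.
case: (leqP a x) => H.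
  apply: Rltb_true; have := le_INR _ _ (elimT leP H); lra.
apply: Rltb_false; have := le_INR _ _ (elimT leP H); rewrite S_INR; lra.
Qed.

Lemma Rltb_hi (x c : nat) : Rltb (2 * INR x) (2 * INR c + 1) = (x <= c)%N.
Proof.
case: (leqP x c) => H.
  apply: Rltb_true; have := le_INR _ _ (elimT leP H); lra.
apply: Rltb_false; have := le_INR _ _ (elimT leP H); rewrite S_INR; lra.
Qed.

Lemma interval_eq a c a' c' : a < c -> a' < c' ->
  (forall x, a < x < c <-> a' < x < c') -> a = a' /\ c = c'.
Proof.
move=> H1 H2 H.
have Ha : a = a'.
  case: (Rtotal_order a a') => [Hlt|[//|Hlt]].
    have h1 := Rmin_l a' c; have h2 := Rmin_r a' c.
    have h3 : a < Rmin a' c by apply: Rmin_glb_lt.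
    have := H ((a + Rmin a' c) / 2); lra.
  have h1 := Rmin_l a c'; have h2 := Rmin_r a c'.
  have h3 : a' < Rmin a c' by apply: Rmin_glb_lt.
  have := H ((a' + Rmin a c') / 2); lra.
split => //.
case: (Rtotal_order c c') => [Hlt|[//|Hlt]].
  have h1 := Rmax_l c a'; have h2 := Rmax_r c a'.
  have h3 : Rmax c a' < c' by apply: Rmax_lub_lt.
  have := H ((c' + Rmax c a') / 2); lra.
have h1 := Rmax_l c' a; have h2 := Rmax_r c' a.
have h3 : Rmax c' a < c by apply: Rmax_lub_lt.
have := H ((c + Rmax c' a) / 2); lra.
Qed.

Lemma rect_eq a c b d a' c' b' d' : a < c -> b < d -> a' < c' -> b' < d' ->
  (forall p, in_rect p (a, c, b, d) <-> in_rect p (a', c', b', d')) ->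
  (a, c, b, d) = (a', c', b', d').
Proof.
move=> H1 H2 H3 H4 H.
have Hm := H ((a + c) / 2, (b + d) / 2); rewrite /in_rect /= in Hm.
have Hm' : a' < (a + c) / 2 < c' /\ b' < (b + d) / 2 < d' by apply Hm; lra.
have [E1 E2] : a = a' /\ c = c'.
  apply: interval_eq => // x; have := H (x, (b + d) / 2); rewrite /in_rect /=; lra.
have [E3 E4] : b = b' /\ d = d'.
  apply: interval_eq => // y; have := H ((a + c) / 2, y); rewrite /in_rect /=; lra.
by rewrite E1 E2 E3 E4.
Qed.

Section Realize.
Variables (C : cfg) (W g n : nat).
Hypothesis Hwf : wf C W g.
Hypothesis HnP : (#|Pt C| <= n)%N.
Hypothesis HnR : (#|Rt C| <= n)%N.

Definition ptof (i : 'I_n) : option (Pt C) :=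
  if @insub _ (fun k => k < #|Pt C|)%N 'I_#|Pt C| (val i) is Some k then Some (enum_val k) else None.
Definition rtof (i : 'I_n) : option (Rt C) :=
  if @insub _ (fun k => k < #|Rt C|)%N 'I_#|Rt C| (val i) is Some k then Some (enum_val k) else None.

Definition Pf (i : 'I_n) : point :=
  match ptof i with Some p => (2 * INR (px p), 2 * INR (py p))
  | None => (2 * INR W + 2 * INR i, 0) end.
Definition Qf (j : 'I_n) : rectangle :=
  match rtof j with
  | Some r => (2 * INR (rx1 r) - 1, 2 * INR (rx2 r) + 1, 2 * INR (ry1 r) - 1, 2 * INR (ry2 r) + 1)
  | None => (-1, 0, -2 * INR j - 3, -2 * INR j - 2) end.

Lemma ptof_inj i i' p : ptof i = Some p -> ptof i' = Some p -> i = i'.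
Proof.
rewrite /ptof; case: insubP => [k _ Ek|] //; case: insubP => [k' _ Ek'|] // [E] [E'].
apply: val_inj; rewrite -Ek -Ek'; congr val; apply: enum_val_inj; by rewrite E E'.
Qed.

Lemma rtof_inj i i' p : rtof i = Some p -> rtof i' = Some p -> i = i'.
Proof.
rewrite /rtof; case: insubP => [k _ Ek|] //; case: insubP => [k' _ Ek'|] // [E] [E'].
apply: val_inj; rewrite -Ek -Ek'; congr val; apply: enum_val_inj; by rewrite E E'.
Qed.

Lemma ptof_rank p : ptof (widen_ord HnP (enum_rank p)) = Some p.
Proof.
rewrite /ptof; case: insubP => [k _ Ek|] /=; last by rewrite ltn_ord.
congr Some; rewrite -[RHS](enum_rankK p); congr enum_val; exact: val_inj.
Qed.

Lemma rtof_rank r : rtof (widen_ord HnR (enum_rank r)) = Some r.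
Proof.
rewrite /rtof; case: insubP => [k _ Ek|] /=; last by rewrite ltn_ord.
congr Some; rewrite -[RHS](enum_rankK r); congr enum_val; exact: val_inj.
Qed.

Lemma inb_PQ i j : in_rectb (Pf i) (Qf j) =
  match ptof i, rtof j with Some p, Some r => inc p r | _, _ => false end.
Proof.
case: Hwf => _ [Hpx [Hrx _]].
rewrite /Pf /Qf /in_rectb; case: (ptof i) => [p|]; case: (rtof j) => [r|] /=.
- by rewrite !Rltb_lo !Rltb_hi /inc andbA.
- rewrite (@Rltb_false (2 * INR (px p)) 0) ?andbF //.
  have := pos_INR (px p); lra.
- rewrite (@Rltb_false (2 * INR W + 2 * INR i) (2 * INR (rx2 r) + 1)) ?andbF //.
  have := le_INR _ _ (elimT leP (Hrx r)); have := pos_INR i; rewrite S_INR; lra.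
- rewrite (@Rltb_false (2 * INR W + 2 * INR i) 0) ?andbF //.
  have := pos_INR i; have := pos_INR W; lra.
Qed.

Lemma realize : exists (P : 'I_n -> point) (Q : 'I_n -> rectangle),
  distinct_points P /\ distinct_rects Q /\ girth_at_least (incidence_rel P Q) g /\
  (edges C <= incidence_edges P Q)%N.
Proof.
case: Hwf => Hpy [Hpx [Hrx [Hnd [Htup Hgirth]]]].
exists Pf, Qf; split.
  move=> i1 i2; rewrite /Pf.
  case E1: (ptof i1) => [p1|]; case E2: (ptof i2) => [p2|] E; move: (congr1 fst E) (congr1 snd E) => /= Ex Ey.
  - have : py p1 = py p2 by apply: INR_eq; lra.
    move/Hpy => Ep; subst p2; exact: ptof_inj E1 E2.
  - have := lt_INR _ _ (elimT ltP (Hpx p1)); have := pos_INR i2; lra.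
  - have := lt_INR _ _ (elimT ltP (Hpx p2)); have := pos_INR i1; lra.
  - apply: ord_inj; apply: INR_eq; lra.
split.
  move=> j1 j2; rewrite /Qf.
  case E1: (rtof j1) => [r1|]; case E2: (rtof j2) => [r2|] => H.
  - have [Hx1 Hy1] := Hnd r1; have [Hx2 Hy2] := Hnd r2.
    have [/le_INR h1 /le_INR h2] : (rx1 r1 <= rx2 r1)%coq_nat /\ (ry1 r1 <= ry2 r1)%coq_nat by split; apply/leP.
    have [/le_INR h3 /le_INR h4] : (rx1 r2 <= rx2 r2)%coq_nat /\ (ry1 r2 <= ry2 r2)%coq_nat by split; apply/leP.
    apply rect_eq in H; try lra.
    case: H => Ea Ec Eb Ed.
    have Er : r1 = r2.
      apply: Htup => /=.
      have -> : rx1 r1 = rx1 r2 by apply: INR_eq; lra.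
      have -> : rx2 r1 = rx2 r2 by apply: INR_eq; lra.
      have -> : ry1 r1 = ry1 r2 by apply: INR_eq; lra.
      have -> : ry2 r1 = ry2 r2 by apply: INR_eq; lra.
      by [].
    subst r2; exact: rtof_inj E1 E2.
  - have [Hx1 Hy1] := Hnd r1.
    have [/le_INR h1 /le_INR h2] : (rx1 r1 <= rx2 r1)%coq_nat /\ (ry1 r1 <= ry2 r1)%coq_nat by split; apply/leP.
    have h5 := pos_INR j2; have h6 := pos_INR (ry1 r1).
    apply rect_eq in H; try lra.
    case: H => _ _ Eb _; lra.
  - have [Hx2 Hy2] := Hnd r2.
    have [/le_INR h1 /le_INR h2] : (rx1 r2 <= rx2 r2)%coq_nat /\ (ry1 r2 <= ry2 r2)%coq_nat by split; apply/leP.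
    have h5 := pos_INR j1; have h6 := pos_INR (ry1 r2).
    apply rect_eq in H; try lra.
    case: H => _ _ Eb _; lra.
  - apply rect_eq in H; try lra.
    case: H => Eb _; apply: ord_inj; apply: INR_eq; lra.
split.
  pose h (x : 'I_n + 'I_n) : option (Pt C + Rt C) :=
    match x with inl i => omap inl (ptof i) | inr j => omap inr (rtof j) end.
  apply: (@girth_transfer _ _ _ _ h _ _ _ Hgirth).
    case=> [i|j] [i'|j'] //=; rewrite inb_PQ.
      case: (ptof i) => [p|] //; case: (rtof j') => [r|] // H.
      by exists (inl p), (inr r).
    case: (ptof i') => [p|] //; case: (rtof j) => [r|] // H.
    by exists (inr r), (inl p).
  case=> [i|j] [i'|j'] u /=.
  - case E1: (ptof i) => [p|] //; case E2: (ptof i') => [p'|] //= [<-] [Ep]; subst p'.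
    by rewrite (ptof_inj E1 E2).
  - by case: (ptof i) => [p|] //; case: (rtof j') => [r|] //= [<-].
  - by case: (rtof j) => [r|] //; case: (ptof i') => [p|] //= [<-].
  - case E1: (rtof j) => [p|] //; case E2: (rtof j') => [p'|] //= [<-] [Ep]; subst p'.
    by rewrite (rtof_inj E1 E2).
rewrite /edges /incidence_edges.
pose f (x : Pt C * Rt C) : 'I_n * 'I_n := (widen_ord HnP (enum_rank x.1), widen_ord HnR (enum_rank x.2)).
have finj : injective f.
  move=> [p r] [p' r'] [E1 E2].
  by rewrite (enum_rank_inj (ord_inj E1)) (enum_rank_inj (ord_inj E2)).
rewrite -(card_imset _ finj); apply: subset_leq_card; apply/subsetP => x /imsetP [[p r]].
rewrite !inE /= => Hpr ->; by rewrite /= inb_PQ ptof_rank rtof_rank.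
Qed.

End Realize.

Open Scope nat_scope.

Lemma Nseq_double g d : 2 <= Nseq g d /\ 2 * Nseq g d <= Nseq g d.+1.
Proof.
elim: d => [|d [IH1 IH2]] /=.
  split => //; have X : 1 <= (2 + 1) ^ g by rewrite expn_gt0.
  nia.
set N := Nseq g d in IH1 IH2 *.
set N' := N * (N * (2 * (N + 1) ^ g)).
have HN' : 2 <= N' by lia.
split => //.
have X : 1 <= (N' + 1) ^ g by rewrite expn_gt0 addn1.
nia.
Qed.

Lemma Nseq_gt g d : d < Nseq g d.
Proof.
elim: d => [|d IH] //=.
have [H1 H2] := Nseq_double g d; move: H2 => /=; lia.
Qed.

Lemma Nseq_bound g d : Nseq g d + 1 <= 4 ^ ((g + 3) ^ d).
Proof.
elim: d => [|d IH] //=.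
set N := Nseq g d in IH *.
have H1 : N * (N * (2 * (N + 1) ^ g)) + 1 <= (N + 1) ^ (g + 3).
  rewrite expnD.
  have HX : 1 <= (N + 1) ^ g by rewrite expn_gt0 addn1.
  set X := (N + 1) ^ g in HX *.
  have -> : (N + 1) ^ 3 = N * N * N + 3 * (N * N) + 3 * N + 1.
    rewrite !expnS expn0; lia.
  nia.
apply: leq_trans H1 _.
by rewrite expnSr expnM leq_exp2r // addn3.
Qed.

Lemma main_nat g n : 3 <= n -> exists d (P : 'I_n -> point) (Q : 'I_n -> rectangle),
  distinct_points P /\ distinct_rects Q /\ girth_at_least (incidence_rel P Q) g /\
  n * d.+1 <= 8 * incidence_edges P Q /\ n < 2 * Nseq g d.+1.
Proof.
move=> Hn.
have [d [Hd1 Hd2]] : exists d, ((n < 4) && (d == 0)) || (2 * Nseq g d <= n) /\ n < 2 * Nseq g d.+1.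
  case: (ltnP n 4) => Hn4.
    exists 0; split; first by apply/orP; left; apply/andP; split.
    have [_ H] := Nseq_double g 0; move: H => /=; lia.
  have Hex : exists d, (fun d => 2 * Nseq g d <= n) d by exists 0.
  have Hbd : forall d, (fun d => 2 * Nseq g d <= n) d -> d <= n.
    move=> d /= H; have := Nseq_gt g d; lia.
  case: (ex_maxnP Hex Hbd) => m Hm Hmax; exists m; split; first by rewrite Hm orbT.
  rewrite ltnNge; apply/negP => H; have := Hmax _ H; by rewrite ltnn.
have [C [W [Hwf [HN [H2 [HR HE]]]]]] := level g d.
set N := #|Pt C| in HN H2 HR HE.
set R := #|Rt C| in HR.
have HN2 : 2 <= N by rewrite HN; case: (Nseq_double g d).
have [q [Hq [HqN [HqR HqE]]]] : exists q, 0 < q /\ q * N <= n /\ q * R <= n /\ n * d.+1 <= 8 * (q * edges C).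
  case/orP: Hd1 => [/andP [Hn4 /eqP Ed]|Hd1].
    subst d; exists 1; rewrite !mul1n; move: HR HE HN; rewrite /= => HR HE HN.
    lia.
  exists (n %/ (2 * N)).
  have H2N : 0 < 2 * N by lia.
  have Hq : 0 < n %/ (2 * N) by rewrite divn_gt0 // HN.
  have Hq1 : n %/ (2 * N) * (2 * N) <= n := leq_divM n (2 * N).
  have Hq2 := ltn_ceil n H2N.
  set q := n %/ (2 * N) in Hq Hq1 Hq2 *.
  have HR2 : R <= 2 * N.
    rewrite expnS in HR; have Ha : 0 < 2 ^ d by rewrite expn_gt0.
    rewrite -(leq_pmul2l Ha); nia.
  split => //; split; first by nia.
  split; first by nia.
  have F : q * (d.+1 * N) <= q * (2 * edges C) by rewrite leq_mul2l HE orbT.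
  nia.
pose G0 := (set0 : {set 'I_q * (Pt C * 'I_0)}).
have Hl0 : forall (j : 'I_q) p (t t' : 'I_0), (j, (p, t)) \in G0 -> (j, (p, t')) \in G0 -> t = t'.
  by move=> j p t t'; rewrite inE.
have Hwf' := wf_step Hq Hl0 (@Good_set0 _ g _ _) Hwf.
have HE' := edges_step Hq Hl0 Hwf.
have HP' : #|Pt (step W G0)| <= n by rewrite card_step_Pt.
have HR' : #|Rt (step W G0)| <= n by rewrite card_step_Rt muln0 addn0.
have [P [Q [HP [HQ [Hg Hed]]]]] := realize Hwf' HP' HR'.
exists d, P, Q; do 3 (split => //); split => //.
apply: leq_trans HqE _; rewrite leq_mul2l; apply/orP; right.
apply: leq_trans Hed; apply: leq_trans HE'; exact: leq_addr.
Qed.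

Open Scope R_scope.

Lemma ln2_lt1 : ln 2 < 1.
Proof.
have H := exp_ineq1 1 ltac:(lra).
rewrite -[X in _ < X](ln_exp 1); apply: ln_increasing; lra.
Qed.

Lemma ln3_lt2 : ln 3 < 2.
Proof.
have H := exp_ineq1 2 ltac:(lra).
rewrite -[X in _ < X](ln_exp 2); apply: ln_increasing; lra.
Qed.

Lemma INR_expn (m k : nat) : INR (m ^ k)%N = INR m ^ k.
Proof. elim: k => [|k IH] //=; by rewrite expnS mult_INR IH. Qed.

Unset Implicit Arguments.

Theorem theorem5p3 (g : nat) (hg : (0 < g)%N) :
  exists c : R, 0 < c /\
    forall n : nat, (3 <= n)%N ->
      exists (P : 'I_n -> point) (Q : 'I_n -> rectangle),
        distinct_points P /\ distinct_rects Q /\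
        girth_at_least (incidence_rel P Q) g /\
        c * INR n * ln (ln (INR n)) <= INR (incidence_edges P Q).
Proof.
pose K := 2 + ln (INR (g + 3)).
have Hlg : 0 <= ln (INR (g + 3)).
  rewrite -ln_1; apply: Rlt_le; apply: ln_increasing; first lra.
  rewrite plus_INR /=; have := pos_INR g; lra.
have HK : 0 < K by rewrite /K; lra.
exists (/ (8 * K)); split; first by apply: Rinv_0_lt_compat; lra.
move=> n Hn.
have [d [P [Q [HP [HQ [Hg [He Hlt]]]]]]] := main_nat g Hn.
exists P, Q; do 3 (split => //).
set E := incidence_edges P Q in He *.
set L := ((g + 3) ^ d.+1)%N.
have HL : (1 <= L)%N by rewrite expn_gt0 addn3.
have Hn2 : (n < 2 ^ (3 * L))%N.
  have := Nseq_bound g d.+1; rewrite -/L => Hb.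
  have H2L : (2 <= 2 ^ L)%N by rewrite -{1}(expn1 2) leq_exp2l.
  rewrite expnM (_ : 2 ^ 3 = 2 * 4)%N // expnMn.
  have F : (2 * 4 ^ L <= 2 ^ L * 4 ^ L)%N by rewrite leq_mul2r H2L orbT.
  lia.
have Hn1 : 1 < INR n.
  have := le_INR 3 n (elimT leP Hn); rewrite /= ; lra.
have HlnP : 0 < ln (INR n) by rewrite -ln_1; apply: ln_increasing; lra.
have HLR : 1 <= INR L by have := le_INR 1 L (elimT leP HL); rewrite /=.
have Hln : ln (INR n) < 3 * INR L.
  have Hr : INR n < 2 ^ (3 * L).
    have := lt_INR _ _ (elimT ltP Hn2); by rewrite INR_expn.
  have Hn0' : 0 < INR n by lra.
  have E3 : INR (3 * L) = 3 * INR L by rewrite mult_INR; congr (_ * _); simpl; lra.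
  have := ln_increasing _ _ Hn0' Hr; rewrite ln_pow; last lra.
  rewrite E3 => H.
  have h1 := ln2_lt1; have h2 := ln_lt_2.
  nra.
have Hlnln : ln (ln (INR n)) < INR d.+1 * K.
  have := ln_increasing _ _ HlnP Hln.
  rewrite ln_mult; [|lra|lra].
  rewrite /L INR_expn ln_pow; last by rewrite plus_INR /=; have := pos_INR g; lra.
  have := ln3_lt2; rewrite /K.
  have Hd1 : 1 <= INR d.+1 by rewrite S_INR; have := pos_INR d; lra.
  move=> h1 h2.
  have : 2 <= 2 * INR d.+1 by lra.
  nra.
have HEr : INR n * INR d.+1 <= 8 * INR E.
  have := le_INR _ _ (elimT leP He); rewrite !mult_INR /=; lra.
have Hn0 : 0 <= INR n by lra.
have H1 : INR n * ln (ln (INR n)) <= INR n * (INR d.+1 * K).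
  apply: Rmult_le_compat_l => //; lra.
rewrite Rmult_assoc.
apply: Rle_trans (_ : / (8 * K) * (INR n * (INR d.+1 * K)) <= _).
  apply: Rmult_le_compat_l => //; apply: Rlt_le; apply: Rinv_0_lt_compat; lra.
have -> : / (8 * K) * (INR n * (INR d.+1 * K)) = INR n * INR d.+1 / 8 by field; lra.
lra.
Qed.
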